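(* Let $(B,\lfloor\cdot,\cdot\rfloor,\|\cdot\|)$ be an SSDB space, $q(b):=\tfrac12\lfloor b,b\rfloor$, and let $f,g\colon B\to\,]{-}\infty,\infty]$ be proper convex lower semicontinuous BC--functions. Suppose $\rho\colon B\to B$ is a continuous linear bijection such that $\lfloor\rho(b),\rho(c)\rfloor=\lfloor b,-c\rfloor$ for all $b,c\in B$. Then $\mathrm{dom}\,f-\rho^{-1}\mathrm{dom}\,g=B\iff{\cal P}_q(f)-\rho^{-1}{\cal P}_q(g)=B$, and $\mathrm{dom}\,f+\rho^{-1}\mathrm{dom}\,g=B\iff{\cal P}_q(f)+\rho^{-1}{\cal P}_q(g)=B$.
   Context: An SSDB space is a triple $(B,\lfloor\cdot,\cdot\rfloor,\|\cdot\|)$ where $B$ is a nonzero real vector space, $\lfloor\cdot,\cdot\rfloor$ a symmetric bilinear form, $(B,\|\cdot\|)$ a Banach space, and there is a linear isometry $\iota$ of $B$ onto $B^*$ with $\langle b,\iota(c)\rangle=\lfloor b,c\rfloor$. $\mathrm{dom}\,f:=\{b\colon f(b)\in\mathbb{R}\}$, $f^@(c):=\sup_b[\lfloor b,c\rfloor-f(b)]$. A BC--function is a proper convex $f$ with $f^@(b)\ge f(b)\ge q(b)$ for all $b$. ${\cal P}_q(f):=\{b\colon f(b)=q(b)\}$. *)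

(* Defs.v *)
From HB Require Import structures.
From mathcomp Require Import all_boot all_order all_algebra.
From mathcomp Require Import all_classical all_reals all_analysis.
Set Implicit Arguments. Unset Strict Implicit. Unset Printing Implicit Defensive.
Import Order.TTheory GRing.Theory Num.Theory.
Import numFieldNormedType.Exports.
Local Open Scope classical_set_scope.
Local Open Scope ring_scope.

Section SSDB.
Context {R : realType} {B : completeNormedModType R}.

(* (B, bf, ||.||) is an SSDB space: bf is a symmetric bilinear form and the map
   iota : c |-> bf _ c is a linear isometry of B ONTO the dual B^* (the space of
   continuous linear functionals with the operator norm). *)
Definition is_SSDB (bf : B -> B -> R) : Prop :=
  (exists b : B, b != 0) /\
  [/\ (forall b c, bf b c = bf c b),
      (forall a b c, bf (a + b) c = bf a c + bf b c),
      (forall (k : R) b c, bf (k *: b) c = k * bf b c),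
      (forall c, (forall b, `|bf b c| <= `|c| * `|b|) /\
                 (forall M : R, (forall b, `|bf b c| <= M * `|b|) -> `|c| <= M)) &
      (forall phi : B -> R,
          (forall a b, phi (a + b) = phi a + phi b) ->
          (forall (k : R) b, phi (k *: b) = k * phi b) ->
          continuous phi ->
          exists c, forall b, phi b = bf b c)].

Definition qf (bf : B -> B -> R) (b : B) : R := bf b b / 2.

Local Open Scope ereal_scope.

Definition proper_fun (f : B -> \bar R) : Prop :=
  (forall b, f b != -oo) /\ (exists b, f b != +oo).

Definition convex_fun (f : B -> \bar R) : Prop :=
  forall (a b : B) (t : R), (0 <= t <= 1)%R ->
    f (t *: a + (1 - t) *: b)%R <= t%:E * f a + (1 - t)%:E * f b.

Definition dom (f : B -> \bar R) : set B := [set b | f b \is a fin_num].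

Definition fenchel (bf : B -> B -> R) (f : B -> \bar R) (c : B) : \bar R :=
  ereal_sup [set (bf b c)%:E - f b | b in [set: B]].

Definition BC_fun (bf : B -> B -> R) (f : B -> \bar R) : Prop :=
  [/\ proper_fun f, convex_fun f &
      forall b, fenchel bf f b >= f b /\ f b >= (qf bf b)%:E].

Definition Pq (bf : B -> B -> R) (f : B -> \bar R) : set B :=
  [set b | f b = (qf bf b)%:E].

End SSDB.

Definition set_add {R : realType} {B : completeNormedModType R} (X Y : set B) : set B :=
  [set (x + y)%R | x in X & y in Y].
Definition set_sub {R : realType} {B : completeNormedModType R} (X Y : set B) : set B :=
  [set (x - y)%R | x in X & y in Y].

(* Main.v *)
Require Import Defs.
From HB Require Import structures.
From mathcomp Require Import all_boot all_order all_algebra.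
From mathcomp Require Import all_classical all_reals all_analysis.
From mathcomp Require Import ring lra.
Set Implicit Arguments. Unset Strict Implicit. Unset Printing Implicit Defensive.
Import Order.TTheory GRing.Theory Num.Theory.
Import numFieldNormedType.Exports.
Local Open Scope classical_set_scope.
Local Open Scope ring_scope.
Section HBsec.
Variables (R : realType) (V : lmodType R) (p : V -> R).
Hypothesis psub : forall x y, p (x + y) <= p x + p y.
Hypothesis phom : forall (t : R) x, 0 < t -> p (t *: x) = t * p x.

Let p0 : p 0 = 0.
Proof.
have := phom 0 (ltr0n R 2); rewrite scaler0 => h; lra.
Qed.

Definition PG (G : set (V * R)) :=
 [/\ forall x a b, G (x,a) -> G (x,b) -> a = b,
     forall x y a b, G (x,a) -> G (y,b) -> G (x+y, a+b),
     forall t x a, G (x,a) -> G (t*:x, t*a) &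
     forall x a, G (x,a) -> a <= p x].

Lemma HB_aux : exists A, PG A /\ forall B, A `<` B -> ~ PG B.
Proof.
apply: Zorn_bigcup => F FP Ftot.
have two : forall X Y z w, F X -> F Y -> X z -> Y w ->
    exists Z, [/\ F Z, Z z & Z w].
  move=> X Y z w FX FY Xz Yw; case: (Ftot X Y FX FY) => [XY|YX].
    by exists Y; split => //; exact: XY.
  by exists X; split => //; exact: YX.
split.
- move=> x a b [X FX Xa] [Y FY Yb]; have [Z [FZ Za Zb]] := two _ _ _ _ FX FY Xa Yb.
  by have [h _ _ _] := FP _ FZ; exact: h Za Zb.
- move=> x y a b [X FX Xa] [Y FY Yb]; have [Z [FZ Za Zb]] := two _ _ _ _ FX FY Xa Yb.
  by have [_ h _ _] := FP _ FZ; exists Z => //; exact: h Za Zb.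
- move=> t x a [X FX Xa]; have [_ _ h _] := FP _ FX; exists X => //; exact: h.
- move=> x a [X FX Xa]; have [_ _ _ h] := FP _ FX; exact: h.
Qed.

Lemma HB_total : exists A, PG A /\ forall x, exists a, A (x, a).
Proof.
have [A [PA Amax]] := HB_aux; exists A; split => //.
have [Afun Aadd Ascal Adom] := PA.
have A00 : A (0, 0).
  apply: contrapT => nA; apply: (Amax [set (0, 0)]).
    split.
      move=> [x a] Axa; exfalso; apply: nA.
      by have := Ascal 0 _ _ Axa; rewrite scale0r mul0r.
    by move=> h; apply: nA; apply: h.
  split => /=.
  - by move=> x a b [-> ->] [->].
  - by move=> x y a b [-> ->] [-> ->]; rewrite !addr0.
  - by move=> t x a [-> ->]; rewrite scaler0 mulr0.
  - by move=> x a [-> ->]; rewrite p0.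
move=> x0; apply: contrapT => nx0.
have nA0 : forall a, ~ A (x0, a) by move=> a Ha; apply: nx0; exists a.
pose S := [set yb.2 - p (yb.1 - x0) | yb in A].
have Sub : forall z c, A (z, c) -> forall s, S s -> s <= p (z + x0) - c.
  move=> z c Azc _ [[y b] Ayb <-] /=.
  have := Adom _ _ (Aadd _ _ _ _ Ayb Azc).
  have := psub (y - x0) (z + x0).
  rewrite (_ : y - x0 + (z + x0) = y + z); last by rewrite addrCA subrK addrC.
  lra.
have Sne : S !=set0 by exists (0 - p (0 - x0)); exists (0, 0).
have Shub : has_ubound S by exists (p (0 + x0) - 0); exact: Sub A00.
pose al := sup S.
have alle : forall z c, A (z, c) -> al <= p (z + x0) - c.
  by move=> z c Azc; apply: ge_sup => // s Ss; exact: Sub Azc _ Ss.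
have alge : forall y b, A (y, b) -> b - p (y - x0) <= al.
  by move=> y b Ayb; apply: ub_le_sup => //; exists (y, b).
pose A' := [set z | exists x a t, A (x, a) /\ z = (x + t *: x0, a + t * al)].
apply: (Amax A').
  split.
    move=> [x a] Axa; exists x, a, 0; split => //; by rewrite scale0r mul0r !addr0.
  move=> /(_ (x0, al)) h; apply: (nA0 al); apply: h.
  by exists 0, 0, 1; split => //; rewrite scale1r mul1r !add0r.
split.
- move=> x a b [y [c [t [Ayc [-> ->]]]]] [y' [c' [t' [Ayc' [E1 ->]]]]].
  have [tt'|tt'] := eqVneq t t'.
    move: E1; rewrite -tt' => /addIr yy'; rewrite -yy' in Ayc'.
    by rewrite (Afun _ _ _ Ayc Ayc').
  exfalso; apply: (nA0 ((t - t')^-1 * (c' - c))).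
  have H1 := Aadd _ _ _ _ Ayc' (Ascal (-1) _ _ Ayc).
  have := Ascal (t - t')^-1 _ _ H1.
  suff -> : (t - t')^-1 *: (y' + (-1) *: y) = x0 by rewrite mulN1r.
  have E : y' + (-1) *: y = (t - t') *: x0.
    rewrite scaleN1r scalerBl (_ : y' = y + t *: x0 - t' *: x0); last by rewrite E1 addrK.
    by rewrite addrAC [y + _]addrC addrK.
  by rewrite E scalerA mulVf ?scale1r // subr_eq0.
- move=> x y a b [x1 [a1 [t1 [A1 [-> ->]]]]] [x2 [a2 [t2 [A2 [-> ->]]]]].
  exists (x1 + x2), (a1 + a2), (t1 + t2); split; first exact: Aadd.
  by rewrite scalerDl mulrDl; congr (_, _); rewrite addrACA.
- move=> s x a [x1 [a1 [t1 [A1 [-> ->]]]]].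
  exists (s *: x1), (s * a1), (s * t1); split; first exact: Ascal.
  by rewrite scalerDr mulrDr scalerA mulrA.
- move=> x a [y [c [t [Ayc [-> ->]]]]].
  have [t0|t0|->] := ltgtP t 0; last first.
  + by rewrite scale0r mul0r !addr0; exact: Adom.
  + have H := alle _ _ (Ascal t^-1 _ _ Ayc).
    have Hp : p (y + t *: x0) = t * p (t^-1 *: y + x0).
      by rewrite -phom // scalerDr scalerA mulfV ?(lt0r_neq0 t0) // scale1r.
    have inv : t * t^-1 = 1 by rewrite mulfV ?(lt0r_neq0 t0).
    rewrite Hp; set P := p _ in H *; set u := t^-1 in H inv.
    have : t * al <= t * (P - u * c) by rewrite ler_pM2l.
    rewrite mulrBr mulrA inv mul1r; lra.
  + have tp : 0 < - t by rewrite oppr_gt0.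
    have H := alge _ _ (Ascal (- t)^-1 _ _ Ayc).
    have Hp : p (y + t *: x0) = - t * p ((- t)^-1 *: y - x0).
      rewrite -phom // scalerBr scalerA mulfV ?(lt0r_neq0 tp) // scale1r.
      by rewrite scaleNr opprK.
    have inv : - t * (- t)^-1 = 1 by rewrite mulfV ?(lt0r_neq0 tp).
    rewrite Hp; set P := p _ in H *; set u := (- t)^-1 in H inv.
    have : - t * (u * c - P) <= - t * al by rewrite ler_pM2l.
    rewrite mulrBr mulrA inv mul1r; lra.
Qed.


Lemma hahn_banach : exists l : V -> R,
  [/\ forall x y, l (x + y) = l x + l y,
      forall (t : R) x, l (t *: x) = t * l x &
      forall x, l x <= p x].
Proof.
have [A [[Afun Aadd Ascal Adom] Atot]] := HB_total.
pose l x := projT1 (cid (Atot x)).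
have Al x : A (x, l x) by rewrite /l; case: cid.
exists l; split.
- by move=> x y; apply: Afun (Al _) (Aadd _ _ _ _ (Al x) (Al y)).
- by move=> t x; apply: Afun (Al _) (Ascal t _ _ (Al x)).
- by move=> x; exact: Adom (Al x).
Qed.
End HBsec.
Section Cont.
Variables (R : realType) (V : normedModType R) (l : V -> R).
Hypothesis ladd : forall x y, l (x + y) = l x + l y.
Hypothesis lscal : forall (t : R) x, l (t *: x) = t * l x.

Lemma lin_bound_cont r K : 0 < r -> (forall x, `|x| < r -> `|l x| <= K) -> continuous l.
Proof.
move=> r0 HK.
have K0 : 0 <= K by have := HK 0; rewrite normr0 => /(_ r0); apply: le_trans.
have lB : forall w, `|l w| <= (2 * K / r) * `|w|.
  move=> w; have [->|w0] := eqVneq w 0.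
    by rewrite normr0 mulr0 (_ : l 0 = 0) ?normr0 // -(scale0r 0) lscal mul0r.
  have nw : 0 < `|w| by rewrite normr_gt0.
  pose u := (r / (2 * `|w|)) *: w.
  have nu : `|u| = r / 2.
    rewrite /u normrZ ger0_norm; last by apply: divr_ge0; [exact: ltW | apply: mulr_ge0].
    by field; rewrite lt0r_neq0.
  have := HK u; rewrite nu => /(_ _).
  have -> : r / 2 < r by lra.
  move=> /(_ isT); rewrite /u lscal normrM ger0_norm; last by apply: divr_ge0; [exact: ltW | apply: mulr_ge0].
  move=> h; have : (2 * `|w| / r) * (r / (2 * `|w|) * `|l w|) <= (2 * `|w| / r) * K.
    by rewrite ler_pM2l // !mulr_gt0 // invr_gt0.
  rewrite mulrA (_ : 2 * `|w| / r * (r / (2 * `|w|)) = 1); last by field; rewrite !lt0r_neq0.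
  rewrite mul1r => h2; apply: (le_trans h2); rewrite (_ : 2 * `|w| / r * K = 2 * K / r * `|w|) //; ring.
have C0 : 0 <= 2 * K / r by apply: divr_ge0 (mulr_ge0 _ K0) (ltW r0).
have d0 : 0 < 2 * K / r + 1 by lra.
move=> x; apply/cvgrPdist_lt => eps e0; apply/nbhs_normP.
exists (eps / (2 * K / r + 1)) => /=; first by rewrite divr_gt0.
move=> y; rewrite /ball_ /= => hy.
have -> : l x - l y = l (x - y) by rewrite ladd -[- y]scaleN1r lscal mulN1r.
apply: (le_lt_trans (lB _)).
have : (2 * K / r) * `|x - y| <= (2 * K / r) * (eps / (2 * K / r + 1)).
  by rewrite ler_wpM2l // ltW.
move=> /le_lt_trans; apply.
rewrite mulrA ltr_pdivrMr // mulrC ltr_pM2l //; lra.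
Qed.
End Cont.
Section Subgrad.
Variables (R : realType) (V : normedModType R) (E : V -> R -> Prop) (v0 : R).
Hypothesis Econv : forall x1 x2 a1 a2 t, 0 <= t <= 1 -> E x1 a1 -> E x2 a2 ->
  E (t *: x1 + (1 - t) *: x2) (t * a1 + (1 - t) * a2).
Hypothesis E0 : forall a, E 0 a -> v0 <= a.
Variables r M : R.
Hypothesis r0 : 0 < r.
Hypothesis EM : forall x, `|x| < r -> E x M.

Let S x := [set z | exists t a, [/\ 0 < t, E (t *: x) a & z = (a - v0) / t]].
Let ts (x : V) := r / (2 * (`|x| + 1)).
Let ts_gt0 x : 0 < ts x.
Proof. by rewrite divr_gt0 // mulr_gt0 // ltr_wpDl. Qed.
Let ts_small x : `|ts x *: x| < r.
Proof.
rewrite normrZ gtr0_norm ?ts_gt0 // /ts.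
have n0 := normr_ge0 x.
rewrite -mulrA gtr_pMr // mulrC ltr_pdivrMr ?mulr_gt0 ?ltr_wpDl // mul1r.
lra.
Qed.

Let S_ne x : S x !=set0.
Proof. by exists ((M - v0) / ts x); exists (ts x), M; split => //; apply: EM. Qed.

Let S_lb x : lbound (S x) ((v0 - M) / ts x).
Proof.
move=> _ [t [a [t0 Eta ->]]].
set s := ts x; have s0 : 0 < s := ts_gt0 x.
have Es : E ((- s) *: x) M by apply: EM; rewrite scaleNr normrN; exact: ts_small.
have st0 : 0 < s + t by rewrite addr_gt0.
have l01 : 0 <= s / (s + t) <= 1.
  apply/andP; split; first by rewrite divr_ge0 // ltW.
  by rewrite ler_pdivrMr // mul1r lerDl ltW.
have := Econv l01 Eta Es.
rewrite !scalerA -scalerDl (_ : s / (s + t) * t + (1 - s / (s + t)) * - s = 0); last first.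
  by field; rewrite lt0r_neq0.
rewrite scale0r => /E0 h.
have : (s + t) * v0 <= (s + t) * (s / (s + t) * a + (1 - s / (s + t)) * M).
  by rewrite ler_pM2l.
rewrite (_ : (s + t) * (s / (s + t) * a + (1 - s / (s + t)) * M) = s * a + t * M); last first.
  by field; rewrite lt0r_neq0.
move=> h2.
rewrite ler_pdivrMr // mulrAC ler_pdivlMr //.
nra.
Qed.

Let S_hlb x : has_lbound (S x).
Proof. by exists ((v0 - M) / ts x); exact: S_lb. Qed.

Let p x := inf (S x).

Let p_le x z : S x z -> p x <= z.
Proof. by move=> Sz; apply: ge_inf. Qed.

Let p_ge x w : (forall z, S x z -> w <= z) -> w <= p x.
Proof. by move=> h; apply: lb_le_inf. Qed.

Let S_add x y z1 z2 : S x z1 -> S y z2 -> S (x + y) (z1 + z2).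
Proof.
move=> [s [a [s0 Esa ->]]] [t [b [t0 Etb ->]]].
have st0 : 0 < s + t by rewrite addr_gt0.
have l01 : 0 <= t / (s + t) <= 1.
  apply/andP; split; first by rewrite divr_ge0 // ltW.
  by rewrite ler_pdivrMr // mul1r lerDr ltW.
have := Econv l01 Esa Etb.
rewrite !scalerA (_ : t / (s + t) * s = s * t / (s + t)); last by field; rewrite lt0r_neq0.
rewrite (_ : (1 - t / (s + t)) * t = s * t / (s + t)); last by field; rewrite lt0r_neq0.
rewrite -scalerDr => h.
exists (s * t / (s + t)), (t / (s + t) * a + (1 - t / (s + t)) * b); split => //.
  by rewrite !mulr_gt0 // invr_gt0.
by field; rewrite !lt0r_neq0.
Qed.

Let p_sub x y : p (x + y) <= p x + p y.
Proof.
have h1 z2 : S y z2 -> p (x + y) - z2 <= p x.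
  move=> Sz2; apply: p_ge => z1 Sz1.
  have := p_le (S_add Sz1 Sz2); lra.
have : p (x + y) - p x <= p y.
  apply: p_ge => z2 Sz2; have := h1 _ Sz2; lra.
lra.
Qed.

Let p_hom (c : R) x : 0 < c -> p (c *: x) = c * p x.
Proof.
move=> c0.
have A1 z : S x z -> S (c *: x) (c * z).
  move=> [t [a [t0 Eta ->]]]; exists (t / c), a; split.
  - by rewrite divr_gt0.
  - by rewrite scalerA mulfVK // lt0r_neq0.
  - by field; rewrite !lt0r_neq0.
have A2 z : S (c *: x) z -> S x (z / c).
  move=> [t [a [t0 Eta ->]]]; exists (t * c), a; split.
  - by rewrite mulr_gt0.
  - by rewrite -scalerA.
  - by field; rewrite !lt0r_neq0.
apply/eqP; rewrite eq_le; apply/andP; split.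
  rewrite -ler_pdivrMl //; apply: p_ge => z Sz.
  by rewrite ler_pdivrMl //; apply: p_le; exact: A1.
apply: p_ge => z Sz.
rewrite -ler_pdivlMl // mulrC; apply: p_le; exact: A2.
Qed.

Lemma subgrad_exists : exists l : V -> R,
  [/\ forall x y, l (x + y) = l x + l y,
      forall (t : R) x, l (t *: x) = t * l x,
      continuous l &
      forall x a, E x a -> v0 + l x <= a].
Proof.
have [l [ladd lscal lp]] := hahn_banach p_sub p_hom.
have key x a : E x a -> v0 + l x <= a.
  move=> Exa; have : l x <= p x by exact: lp.
  have : p x <= (a - v0) / 1 by apply: p_le; exists 1, a; split => //; rewrite scale1r.
  rewrite divr1; lra.
exists l; split => //.
apply: (@lin_bound_cont _ _ l ladd lscal r (M - v0) r0) => x nx.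
have h1 := key _ _ (EM nx).
have : `|- x| < r by rewrite normrN.
move/EM/key; rewrite -scaleN1r lscal => h2.
rewrite ler_norml; lra.
Qed.
End Subgrad.
Section Removal.
Variables (R : realType) (B : completeNormedModType R).
Definition ee (k : nat) : R := (2^-1)^+k.

Lemma ee_gt0 k : 0 < ee k.
Proof. by rewrite /ee exprn_gt0 // invr_gt0. Qed.

Lemma eeS k : ee k.+1 = ee k / 2.
Proof. by rewrite /ee exprS mulrC. Qed.

Lemma ee_small eps : 0 < eps -> exists n, forall k, (n <= k)%N -> ee k < eps.
Proof.
move=> e0.
have : (GRing.exp (2^-1 : R) : R ^nat) @ \oo --> 0.
  by apply: cvg_expr; rewrite ger0_norm ?invr_ge0 // invf_lt1 // ltr1n.
move/cvgrPdist_lt => /(_ _ e0) [n _ Hn]; exists n => k nk.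
have := Hn k nk; rewrite /= sub0r normrN ger0_norm //; exact: ltW (ee_gt0 k).
Qed.

Lemma ee_anti k m : (k <= m)%N -> ee m <= ee k.
Proof.
move=> km; rewrite /ee -(subnKC km) exprD ler_piMr ?exprn_ge0 ?invr_ge0 //.
by rewrite exprn_ile1 ?invr_ge0 // invf_le1 // ler1n.
Qed.

Lemma geom_cvg (u : nat -> B) c : (forall k j, `|u (k + j)%N - u k| <= c * ee k) ->
  cvg (u @ \oo).
Proof.
move=> H; apply: cauchy_cvg; apply: cauchy_exP => eps e0.
have c0 : 0 <= c.
  by have := H 0%N 0%N; rewrite addn0 subrr normr0 /ee expr0 mulr1.
have c1 : 0 < c + 1 by lra.
have [n Hn] := ee_small (divr_gt0 e0 c1).
exists (u n); rewrite /fmapE -ball_normE /ball_.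
exists n => // m nm /=.
rewrite distrC -(subnKC nm); apply: (le_lt_trans (H _ _)).
have := Hn n (leqnn n); rewrite ltr_pdivlMr // => h.
have := ee_gt0 n; nra.
Qed.

Lemma geom_lim (u w : nat -> B) (L : B) c : u @ \oo --> L ->
  (forall k, `|w k - u k| <= c * ee k) -> w @ \oo --> L.
Proof.
move=> /cvgrPdist_lt uL H; apply/cvgrPdist_lt => eps e0.
have c0 : 0 <= c by have := H 0%N; rewrite /ee expr0 mulr1; apply: le_trans.
have c1 : 0 < c + 1 by lra.
have e2 : 0 < eps / 2 by rewrite divr_gt0.
have [n Hn] := ee_small (divr_gt0 e2 c1).
have := uL _ e2; move=> [m _ Hm].
exists (maxn n m) => // k /=; rewrite geq_max => /andP[nk mk].
have h1 := Hm k mk; have h2 := H k; have h3 := Hn k nk.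
rewrite ltr_pdivlMr // in h3.
have : `|L - w k| <= `|L - u k| + `|u k - w k|.
  by rewrite (le_trans _ (ler_normD _ _)) // addrA subrK.
rewrite distrC in h2.
have := ee_gt0 k; nra.
Qed.


Lemma removal (C1 C2 : set B) (rho N : R) :
  0 < rho ->
  (forall a b t, 0 <= t <= 1 -> C1 a -> C1 b -> C1 (t *: a + (1 - t) *: b)) ->
  (forall a b t, 0 <= t <= 1 -> C2 a -> C2 b -> C2 (t *: a + (1 - t) *: b)) ->
  (forall y, C1 y -> `|y| <= N) -> (forall z, C2 z -> `|z| <= N) ->
  closed C1 -> closed C2 ->
  (forall w, `|w| < rho -> exists y z, [/\ C1 y, C2 z & `|w - (y - z)| < rho / 2]) ->
  forall x, `|x| < rho / 2 -> exists y z, [/\ C1 y, C2 z & x = y - z].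
Proof.
move=> rho0 cv1 cv2 b1 b2 cl1 cl2 appr x nx.
have [h Hh] : {h : B -> B * B & forall w, `|w| < rho ->
    [/\ C1 (h w).1, C2 (h w).2 & `|w - ((h w).1 - (h w).2)| < rho / 2]}.
  apply: (@choice B (B * B) (fun w yz => `|w| < rho ->
     [/\ C1 yz.1, C2 yz.2 & `|w - (yz.1 - yz.2)| < rho / 2])) => w; case: (pselect (`|w| < rho)) => wr.
  - by have [y [z [? ? ?]]] := appr w wr; exists (y, z).
  - by exists (0, 0).
pose fix S n := if n is k.+1 then
   let w := (2 / ee k) *: (x - ((S k).1 - (S k).2)) in
   ((S k).1 + (ee k / 2) *: (h w).1, (S k).2 + (ee k / 2) *: (h w).2)
  else (0, 0).
pose W k := (2 / ee k) *: (x - ((S k).1 - (S k).2)).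
pose Y k := (h (W k)).1.
pose Z k := (h (W k)).2.
have SS k : S k.+1 = ((S k).1 + (ee k / 2) *: Y k, (S k).2 + (ee k / 2) *: Z k) by [].
have J k : `|x - ((S k).1 - (S k).2)| < rho * ee k / 2.
  elim: k => [|k IH]; first by rewrite /= subrr subr0 /ee expr0 mulr1.
  have ek := ee_gt0 k.
  have Wk : `|W k| < rho.
    rewrite /W normrZ ger0_norm ?divr_ge0 ?ltW //.
    rewrite -[X in _ < X](_ : 2 / ee k * (rho * ee k / 2) = rho); last first.
      by field; rewrite lt0r_neq0.
    by rewrite ltr_pM2l // divr_gt0.
  have [_ _ HW] := Hh _ Wk.
  rewrite SS /=.
  have -> : x - ((S k).1 + ee k / 2 *: Y k - ((S k).2 + ee k / 2 *: Z k)) =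
       (ee k / 2) *: (W k - (Y k - Z k)).
    rewrite scalerBr /W scalerA (_ : ee k / 2 * (2 / ee k) = 1); last first.
      by field; rewrite lt0r_neq0.
    by rewrite scale1r scalerBr (opprD (S k).2) addrACA opprD addrA.
  rewrite normrZ ger0_norm ?divr_ge0 ?ltW // eeS.
  rewrite (_ : rho * (ee k / 2) / 2 = ee k / 2 * (rho / 2)); last by field.
  by rewrite ltr_pM2l // divr_gt0.
have Wk k : `|W k| < rho.
  have ek := ee_gt0 k.
  rewrite /W normrZ ger0_norm ?divr_ge0 ?ltW //.
  rewrite -[X in _ < X](_ : 2 / ee k * (rho * ee k / 2) = rho); last first.
    by field; rewrite lt0r_neq0.
  by rewrite ltr_pM2l ?divr_gt0 // J.
have CY k : C1 (Y k) by have [] := Hh _ (Wk k).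
have CZ k : C2 (Z k) by have [] := Hh _ (Wk k).
have tele (T : nat -> B) (V : nat -> B) : (forall k, T k.+1 = T k + (ee k / 2) *: V k) ->
    (forall k, `|V k| <= N) -> forall k j, `|T (k + j)%N - T k| <= N * ee k.
  move=> TS VN k j; have N0 : 0 <= N by apply: le_trans (VN 0%N); exact: normr_ge0.
  suff : `|T (k + j)%N - T k| <= N * (ee k - ee (k + j)).
    move/le_trans; apply; apply: ler_wpM2l => //; have := ee_gt0 (k + j)%N; lra.
  elim: j => [|j IH]; first by rewrite addn0 !subrr normr0 mulr0.
  rewrite addnS TS eeS (addrAC (T (k + j)%N)).
  apply: (le_trans (ler_normD _ _)); rewrite normrZ ger0_norm; last by rewrite divr_ge0 // ltW // ee_gt0.
  have e0 := ee_gt0 (k + j)%N; have := VN (k + j)%N => /(ler_wpM2l (divr_ge0 (ltW e0) (ler0n R 2))) h1. lra.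
have memb (C : set B) (T V : nat -> B) :
    (forall a b t, 0 <= t <= 1 -> C a -> C b -> C (t *: a + (1 - t) *: b)) ->
    (forall y, C y -> `|y| <= N) -> closed C -> (forall k, C (V k)) ->
    T 0%N = 0 -> (forall k, T k.+1 = T k + (ee k / 2) *: V k) ->
    exists L, T @ \oo --> L /\ C L.
  move=> cv bC clC CV T0 TS.
  have VN k : `|V k| <= N by exact: bC.
  have cvT : cvg (T @ \oo) by apply: (geom_cvg (tele _ _ TS VN)).
  exists (lim (T @ \oo)); split => //.
  have G k : forall q, C q -> C (T k + ee k *: q).
    elim: k => [|k IH] q Cq; first by rewrite T0 add0r /ee expr0 scale1r.
    have inner := cv _ _ 2^-1 _ (CV k) Cq.
    have := IH _ (inner _); rewrite scalerDr !scalerA TS eeS -addrA.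
    rewrite (_ : ee k * (1 - 2^-1) = ee k / 2) //; last by field.
    by apply; rewrite invr_ge0 ler0n /= invf_le1 // ler1n.
  apply: (@closed_cvg nat B \oo _ (fun k => T k + ee k *: V 0%N) C clC).
    by apply: nearW => k; apply: G.
  apply: (geom_lim cvT (c := N)) => k.
  have e0 := ltW (ee_gt0 k).
  rewrite addrC addKr normrZ ger0_norm // [N * _]mulrC.
  by apply: ler_wpM2l.
have [P [cP CP]] := memb C1 (fun k => (S k).1) Y cv1 b1 cl1 CY erefl (fun k => erefl).
have [Q [cQ CQ]] := memb C2 (fun k => (S k).2) Z cv2 b2 cl2 CZ erefl (fun k => erefl).
exists P, Q; split => //.
have h1 : (fun k => (S k).1 - (S k).2) @ \oo --> P - Q by exact: cvgB cP cQ.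
have h2 : (fun _ : nat => x) @ \oo --> P - Q.
  have := @geom_lim (fun k => (S k).1 - (S k).2) (fun _ => x) (P - Q) (rho / 2) h1.
  apply => k /=.
  rewrite (_ : rho / 2 * ee k = rho * ee k / 2); last by rewrite mulrAC.
  exact: ltW (J k).
have h3 : (fun _ : nat => x) @ \oo --> x by exact: cvg_cst.
exact: (cvg_unique _ h3 h2).
Qed.
End Removal.
Section CQ.
Variables (R : realType) (B : completeNormedModType R).

Definition subl (phi : B -> \bar R) (n : R) := [set y | (phi y <= n%:E)%E /\ `|y| <= n].

Lemma subl_convex phi n : convex_fun phi ->
  forall a b t, 0 <= t <= 1 -> subl phi n a -> subl phi n b -> subl phi n (t *: a + (1 - t) *: b).
Proof.
move=> cphi a b t /andP[t0 t1] [pa na] [pb nb]; split.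
  apply: (le_trans (cphi a b t _)); first by rewrite t0 t1.
  have t0' : (0 <= 1 - t) by lra.
  rewrite (_ : n%:E = t%:E * n%:E + (1 - t)%:E * n%:E)%E; last by rewrite -!EFinM -EFinD; congr (_%:E); ring.
  by apply: leeD; apply: lee_wpmul2l.
apply: (le_trans (ler_normD _ _)); rewrite !normrZ !ger0_norm //; last by lra.
by rewrite (_ : n = t * n + (1 - t) * n); [apply: lerD; apply: ler_wpM2l => //; lra | ring].
Qed.

Lemma subl_closed phi n : lower_semicontinuous phi -> closed (subl phi n).
Proof.
move=> lsc.
have -> : subl phi n = [set y | (phi y <= n%:E)%E] `&` (Num.norm @^-1` [set r | r <= n]).
  by apply/seteqP; split => y.
apply: closedI.
  have -> : [set y | (phi y <= n%:E)%E] = ~` [set y | (n%:E < phi y)%E].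
    by apply/seteqP; split => y /=; rewrite leNgt => /negP.
  by rewrite -openC setCK; move/lower_semicontinuousP: lsc; apply.
apply: preimage_closed; last exact: closed_le.
by move=> x _; exact: norm_continuous.
Qed.

Lemma closure_approx (A : set B) x : closure A x -> forall e, 0 < e -> exists a, A a /\ `|x - a| < e.
Proof.
move=> cA e e0.
have : nbhs x [set y | `|x - y| < e] by apply/nbhs_normP; exists e.
by move/cA => [a [Aa xa]]; exists a.
Qed.

Lemma cq_ball phi1 phi2 : convex_fun phi1 -> convex_fun phi2 ->
  lower_semicontinuous phi1 -> lower_semicontinuous phi2 ->
  (forall x, exists y z, [/\ x = y - z, phi1 y \is a fin_num & phi2 z \is a fin_num]) ->
  exists r N, 0 < r /\ forall x, `|x| < r ->
    exists y z, [/\ subl phi1 N y, subl phi2 N z & x = y - z].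
Proof.
move=> c1 c2 l1 l2 dom12.
pose K n := [set x | exists y z, [/\ subl phi1 n%:R y, subl phi2 n%:R z & x = y - z]].
have submono phi n m : (n <= m)%N -> subl phi n%:R `<=` subl phi m%:R.
  move=> nm y [h1 h2]; have nm' : (n%:R <= m%:R :> R) by rewrite ler_nat.
  split; last exact: le_trans nm'.
  by apply: (le_trans h1); rewrite lee_fin.
have Kmono n m : (n <= m)%N -> K n `<=` K m.
  move=> nm x [y [z [h1 h2 ->]]]; exists y, z; split; [exact: (submono _ _ _ nm _ h1) | exact: (submono _ _ _ nm _ h2) | by []].
have Kconv n a b t : 0 <= t <= 1 -> K n a -> K n b -> K n (t *: a + (1 - t) *: b).
  move=> t01 [y1 [z1 [a1 a2 ->]]] [y2 [z2 [b1 b2 ->]]].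
  exists (t *: y1 + (1 - t) *: y2), (t *: z1 + (1 - t) *: z2); split.
  - exact: subl_convex.
  - exact: subl_convex.
  - by rewrite !scalerBr opprD addrACA.
have cover x : exists n, K n x.
  have [y [z [-> fy fz]]] := dom12 x.
  pose M := Num.max (Num.max `|fine (phi1 y)| `|fine (phi2 z)|) (Num.max `|y| `|z|).
  have Mn : M <= (Num.truncn M).+1%:R by exact: ltW (truncnS_gt M).
  exists (Num.truncn M).+1, y, z; split => //; split.
  - rewrite -(fineK fy) lee_fin; apply: (le_trans (ler_norm _)); apply: le_trans Mn.
    by rewrite /M !le_max lexx.
  - by apply: le_trans Mn; rewrite /M !le_max lexx !orbT.
  - rewrite -(fineK fz) lee_fin; apply: (le_trans (ler_norm _)); apply: le_trans Mn.
    by rewrite /M !le_max lexx !orbT.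
  - by apply: le_trans Mn; rewrite /M !le_max lexx !orbT.
have [n0 [x0 [r0 [r00 Hb]]]] : exists n x0 r, 0 < r /\
    forall u, `|u| < r -> closure (K n) (x0 + u).
  apply: contrapT => nH.
  pose F i := ~` closure (K i).
  have : dense (\bigcap_i (F i)).
    apply: Baire => i; split; first exact/closed_openC/closed_closure.
    move=> O [q Oq] opO.
    have : nbhs q O by apply: open_nbhs_nbhs; split.
    move/nbhs_normP => [e e0 Oe].
    apply: contrapT => nOF; apply: nH; exists i, q, e; split => // u ue.
    apply: contrapT => nc; apply: nOF; exists (q + u); split => //.
    by apply: Oe; rewrite /ball_ /= opprD addNKr normrN.
  move=> /(_ setT) [].
  - by exists 0.
  - exact: openT.
  move=> x [_ Fx]; have [n Kx] := cover x.
  by apply: (Fx n I); apply: subset_closure.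
have [m Km] := cover (- x0).
pose N := (maxn n0 m)%:R : R.
have approx w : `|w| < r0 / 2 -> forall e, 0 < e -> exists y z,
    [/\ subl phi1 N y, subl phi2 N z & `|w - (y - z)| < e].
  move=> nw e e0.
  have n2w : `|2 *: w| < r0.
    by rewrite normrZ ger0_norm // -ltr_pdivlMl // mulrC.
  have [a' [Ka' ha']] := closure_approx (Hb _ n2w) (mulr_gt0 (ltr0n R 2) e0).
  have h12 : 0 <= (2^-1 : R) <= 1.
    by rewrite invr_ge0 ler0n /= invf_le1 // ler1n.
  have := Kconv (maxn n0 m) _ _ 2^-1 h12 (Kmono _ _ (leq_maxl n0 m) _ Ka')
      (Kmono _ _ (leq_maxr n0 m) _ Km).
  move=> [y [z [hy hz Ea]]]; exists y, z; split => //.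
  rewrite -Ea (_ : 1 - 2^-1 = 2^-1 :> R); last by field.
  rewrite (_ : w - (2^-1 *: a' + 2^-1 *: - x0) = 2^-1 *: (x0 + 2 *: w - a')).
    rewrite normrZ ger0_norm ?invr_ge0 ?ler0n //.
    by rewrite mulrC ltr_pdivrMr // mulrC.
  rewrite scalerBr scalerDr scalerA mulVf ?pnatr_eq0 // scale1r scalerN.
  by rewrite opprD opprK addrC -addrA addrC.
have r4 : 0 < r0 / 2 by rewrite divr_gt0.
exists (r0 / 2 / 2), N; split; first by rewrite divr_gt0.
apply: (@removal _ _ _ _ (r0 / 2) N r4).
- exact: subl_convex.
- exact: subl_convex.
- by move=> y [].
- by move=> y [].
- exact: subl_closed.
- exact: subl_closed.
- move=> w nw; apply: approx => //; exact: divr_gt0.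
Qed.
End CQ.
Section Core.
Variables (R : realType) (B : completeNormedModType R) (bf : B -> B -> R).
Hypothesis HS : is_SSDB bf.

Let bfC : forall b c, bf b c = bf c b. Proof. by case: HS => _ []. Qed.
Let bfD1 : forall a b c, bf (a + b) c = bf a c + bf b c. Proof. by case: HS => _ []. Qed.
Let bfZ1 : forall (k : R) b c, bf (k *: b) c = k * bf b c. Proof. by case: HS => _ []. Qed.
Let bfN1 a c : bf (- a) c = - bf a c. Proof. by rewrite -scaleN1r bfZ1 mulN1r. Qed.
Let bfB1 a b c : bf (a - b) c = bf a c - bf b c. Proof. by rewrite bfD1 bfN1. Qed.
Let bfD2 a b c : bf c (a + b) = bf c a + bf c b. Proof. by rewrite bfC bfD1 !(bfC _ c). Qed.
Let bfN2 a c : bf c (- a) = - bf c a. Proof. by rewrite bfC bfN1 bfC. Qed.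
Let bfB2 a b c : bf c (a - b) = bf c a - bf c b. Proof. by rewrite bfD2 bfN2. Qed.
Let bfnorm c b : `|bf b c| <= `|c| * `|b|. Proof. by case: HS => _ [_ _ _ /(_ c) [] + _]. Qed.
Let bfonto : forall phi : B -> R,
          (forall a b, phi (a + b) = phi a + phi b) ->
          (forall (k : R) b, phi (k *: b) = k * phi b) ->
          continuous phi ->
          exists c, forall b, phi b = bf b c.
Proof. by case: HS => _ []. Qed.

Let q := qf bf.
Let qD a b : q (a + b) = q a + q b + bf a b.
Proof. by rewrite /q /qf bfD1 !bfD2 (bfC b a); field. Qed.
Let qN a : q (- a) = q a.
Proof. by rewrite /q /qf bfN1 bfN2 opprK. Qed.
Let qB a b : q (a - b) = q a + q b - bf a b.
Proof. by rewrite qD qN bfN2. Qed.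

Lemma fenchel_le (h : B -> \bar R) x M : (forall b, h b != -oo%E) ->
  (forall b u, (h b <= u%:E)%E -> bf b x - u <= M) -> (fenchel bf h x <= M%:E)%E.
Proof.
move=> hN H; apply: ge_ereal_sup => _ [b _ <-].
case E : (h b) => [v| |]; last by move: (hN b); rewrite E.
- by rewrite -EFinB lee_fin; apply: H; rewrite E.
- by rewrite /= leNye.
Qed.

Lemma fenchel_gt (h : B -> \bar R) x a : (forall b, h b != -oo%E) ->
  (a%:E < fenchel bf h x)%E -> exists b u, (h b <= u%:E)%E /\ a < bf b x - u.
Proof.
move=> hN /ereal_sup_gt [_ [b _ <-]].
case E : (h b) => [v| |]; last by move: (hN b); rewrite E.
- by rewrite -EFinB lte_fin => h1; exists b, v; split => //; rewrite E.
- by rewrite /= ltNge leNye.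
Qed.

Lemma comb_le (X Y : \bar R) (u1 u2 t : R) : 0 <= t <= 1 ->
  (X <= u1%:E)%E -> (Y <= u2%:E)%E -> (t%:E * X + (1 - t)%:E * Y <= (t * u1 + (1 - t) * u2)%:E)%E.
Proof.
move=> /andP[t0 t1] hX hY; have t0' : 0 <= 1 - t by lra.
apply: le_trans (leeD (lee_wpmul2l _ hX) (lee_wpmul2l _ hY)) _; rewrite ?lee_fin //.
Qed.

Lemma subrACA (u v u' v' : B) : (u + v) - (u' + v') = (u - u') + (v - v').
Proof. by rewrite opprD addrACA. Qed.

Lemma comb_id (t : R) (a a' c x x' : B) :
  t *: (a - c - x) + (1 - t) *: (a' - c - x') =
  (t *: a + (1 - t) *: a') - c - (t *: x + (1 - t) *: x').
Proof.
have hc : t *: c + (1 - t) *: c = c by rewrite -scalerDl addrC subrK scale1r.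
rewrite -[X in _ = _ - X - _]hc (subrACA (t *: a)) subrACA.
by rewrite !scalerBr.
Qed.

Lemma convex_comp (k : B -> \bar R) (s : B -> B) : convex_fun k ->
  (forall a b t, s (t *: a + (1 - t) *: b) = t *: s a + (1 - t) *: s b) ->
  convex_fun (fun z => k (s z)).
Proof. by move=> ck hs a b t t01; rewrite hs; exact: ck. Qed.

Lemma lsc_comp (k : B -> \bar R) (s : B -> B) : continuous s ->
  lower_semicontinuous k -> lower_semicontinuous (fun z => k (s z)).
Proof.
move=> cs /lower_semicontinuousP lk; apply/lower_semicontinuousP => a.
have -> : [set x | (a%:E < k (s x))%E] = s @^-1` [set y | (a%:E < k y)%E] by [].
by apply: open_comp => // x _; exact: cs.
Qed.

Lemma core2 (f g : B -> \bar R) (s : B -> B) :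
  BC_fun bf f -> lower_semicontinuous f -> BC_fun bf g -> lower_semicontinuous g ->
  (forall a b, s (a + b) = s a + s b) -> (forall (k : R) b, s (k *: b) = k *: s b) ->
  continuous s -> (forall b, exists z, s z = b) -> (forall a b, bf (s a) (s b) = - bf a b) ->
  (forall x, exists y z, [/\ x = y - z, f y \is a fin_num & g (s z) \is a fin_num]) ->
  forall c, exists e, f (c + e) = (q (c + e))%:E /\ g (s e) = (q (s e))%:E.
Proof.
move=> [[fN _] cf fBC] lf [[gN _] cg gBC] lg sD sZ scont ssurj santi dom c.
pose k z := g (s z).
have kN z : k z != -oo%E by exact: gN.
have kq z : ((- q z)%:E <= k z)%E.
  have [_ ] := gBC (s z); apply: le_trans; rewrite lee_fin /q /qf santi; lra.
have fq y : ((q y)%:E <= f y)%E by have [] := fBC y.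
have sconv a b t : s (t *: a + (1 - t) *: b) = t *: s a + (1 - t) *: s b.
  by rewrite sD !sZ.
have ck : convex_fun k by exact: convex_comp.
have lk : lower_semicontinuous k by exact: lsc_comp.
pose E (x : B) (a : R) := exists (y : B) (u w : R), [/\ (f y <= u%:E)%E, (k (y - c - x)%R <= w%:E)%E & u - bf y c + w <= a].
have Econv x1 x2 a1 a2 t : 0 <= t <= 1 -> E x1 a1 -> E x2 a2 ->
    E (t *: x1 + (1 - t) *: x2) (t * a1 + (1 - t) * a2).
  move=> t01 [y1 [u1 [w1 [f1 k1 h1]]]] [y2 [u2 [w2 [f2 k2 h2]]]].
  exists (t *: y1 + (1 - t) *: y2), (t * u1 + (1 - t) * u2), (t * w1 + (1 - t) * w2); split.
  - by apply: le_trans (cf _ _ _ t01) _; exact: comb_le.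
  - by rewrite -comb_id; apply: le_trans (ck _ _ _ t01) _; exact: comb_le.
  - rewrite bfD1 !bfZ1; move/andP: t01 => [t0 t1].
    have t0' : 0 <= 1 - t by lra.
    have := ler_wpM2l t0 h1; have := ler_wpM2l t0' h2; nra.
have E0 a : E 0 a -> - q c <= a.
  move=> [y [u [w [fy ky h]]]].
  have h1 := le_trans (fq y) fy; have h2 := le_trans (kq _) ky.
  rewrite subr0 in h2; rewrite !lee_fin in h1 h2; rewrite qB in h2; lra.
have domk x : exists y z, [/\ x = y - z, f y \is a fin_num & k (z - c) \is a fin_num].
  have [y [z [hx fy kz]]] := dom (x + c).
  exists y, (z + c); split => //; last by rewrite addrK.
  by rewrite opprD addrA -hx addrK.
have shconv a b t : (t *: a + (1 - t) *: b) - c = t *: (a - c) + (1 - t) *: (b - c).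
  have h1 : t + (1 - t) = 1 :> R by ring.
  by rewrite !scalerBr -subrACA -scalerDl h1 scale1r.
have shcont : continuous (fun z : B => z - c).
  move=> z; apply: cvgB; [exact: cvg_id | exact: cvg_cst].
have [r [N [r0 HN]]] := cq_ball cf (convex_comp ck shconv) lf (lsc_comp shcont lk) domk.
pose M := N + `|c| * N + N.
have EM x : `|x| < r -> E x M.
  move=> nx; have [y [z [[fy ny] [kz nz] ->]]] := HN x nx.
  exists y, N, N; split => //.
  - by rewrite (_ : y - c - (y - z) = z - c) // opprB addrC addrA subrK.
  - have h1 := bfnorm c y; have h2 := ler_wpM2l (normr_ge0 c) ny.
    have h3 : - bf y c <= `|bf y c| by rewrite -normrN ler_norm.
    rewrite /M; lra.
have [l [ladd lscal lcont lkey]] := subgrad_exists Econv E0 r0 EM.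
have [e He] := bfonto ladd lscal lcont.
have key y z u w : (f y <= u%:E)%E -> (k z <= w%:E)%E ->
    bf y (c + e) - u + (bf z (- e) - w) <= bf c e + q c.
  move=> fy kz.
  have hE : E (y - c - z) (u - bf y c + w).
    exists y, u, w; split => //.
    by rewrite (_ : y - c - (y - c - z) = z) // opprB addrC subrK.
  have := lkey _ _ hE; rewrite !He !bfB1 bfD2 bfN2; lra.
exists e.
have qce : q (c + e) = q c + q e + bf c e := qD c e.
have qse : q (s e) = - q e by rewrite /q /qf santi mulNr.
have lowF eps : 0 < eps -> exists y u, (f y <= u%:E)%E /\ q (c + e) - eps < bf y (c + e) - u.
  move=> e0; apply: fenchel_gt fN _.
  have [h1 h2] := fBC (c + e).
  apply: lt_le_trans h1; apply: lt_le_trans h2; rewrite lte_fin /q; lra.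
have lowK eps : 0 < eps -> exists z w, (k z <= w%:E)%E /\ - q e - eps < bf z (- e) - w.
  move=> e0.
  have [|b [u [gb hb]]] := @fenchel_gt g (s e) (- q e - eps) gN.
    have [h1 h2] := gBC (s e).
    apply: lt_le_trans h1; apply: lt_le_trans h2; rewrite lte_fin -/q qse; lra.
  have [z zb] := ssurj b; exists z, u; split; first by rewrite /k zb.
  by rewrite -zb santi -bfN2 in hb.
split.
  apply/eqP; rewrite eq_le; apply/andP; split; last exact: fq.
  apply: le_trans (proj1 (fBC (c + e))) _; apply/lee_addgt0Pr => eps e0.
  have [z [w [kz hz]]] := lowK eps e0.
  rewrite -EFinD; apply: fenchel_le fN _ => y u fy.
  have := key y z u w fy kz; lra.
apply/eqP; rewrite eq_le; apply/andP; split; last by have [] := gBC (s e).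
apply: le_trans (proj1 (gBC (s e))) _; apply/lee_addgt0Pr => eps e0.
have [y [u [fy hy]]] := lowF eps e0.
rewrite -EFinD; apply: fenchel_le gN _ => b w gb.
have [z zb] := ssurj b; rewrite -zb santi -bfN2.
have kz : (k z <= w%:E)%E by rewrite /k zb.
have := key y z u w fy kz; lra.
Qed.
End Core.
Lemma SSDB_bfN2 (R : realType) (B : completeNormedModType R) (bf : B -> B -> R) :
  is_SSDB bf -> forall a b, bf a (- b) = - bf a b.
Proof.
move=> [_ [bfC _ bfZ1 _ _]] a b.
by rewrite bfC -scaleN1r bfZ1 mulN1r bfC.
Qed.

Lemma Pq_dom (R : realType) (B : completeNormedModType R) (bf : B -> B -> R) (f : B -> \bar R) :
  Pq bf f `<=` dom f.
Proof. by move=> b; rewrite /Pq /dom /= => ->. Qed.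

Unset Implicit Arguments. Set Strict Implicit.

Theorem corollary4p7 (R : realType) (B : completeNormedModType R)
  (bf : B -> B -> R) (f g : B -> \bar R) (rho : B -> B) :
  is_SSDB bf ->
  BC_fun bf f -> lower_semicontinuous f ->
  BC_fun bf g -> lower_semicontinuous g ->
  (forall a b, rho (a + b) = rho a + rho b) ->
  (forall (k : R) b, rho (k *: b) = k *: rho b) ->
  continuous rho -> bijective rho ->
  (forall b c, bf (rho b) (rho c) = bf b (- c)) ->
  (set_sub (dom f) (rho @^-1` dom g) = [set: B] <->
   set_sub (Pq bf f) (rho @^-1` Pq bf g) = [set: B]) /\
  (set_add (dom f) (rho @^-1` dom g) = [set: B] <->
   set_add (Pq bf f) (rho @^-1` Pq bf g) = [set: B]).
Proof.
move=> HS BCf lf BCg lg rD rZ rcont [rinv rK rKinv] ranti.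
have ranti' a b : bf (rho a) (rho b) = - bf a b by rewrite ranti SSDB_bfN2.
have rsurj b : exists z, rho z = b by exists (rinv b); rewrite rKinv.
split; split => H.
- apply/seteqP; split => // c _.
  have dm x : exists y z, [/\ x = y - z, f y \is a fin_num & g (rho z) \is a fin_num].
    have : set_sub (dom f) (rho @^-1` dom g) x by rewrite H.
    by move=> [y fy [z gz <-]]; exists y, z.
  have [e [fe ge]] := core2 HS BCf lf BCg lg rD rZ rcont rsurj ranti' dm c.
  by exists (c + e) => //; exists e => //; rewrite addrK.
- apply/seteqP; split => // c _.
  have : set_sub (Pq bf f) (rho @^-1` Pq bf g) c by rewrite H.
  by move=> [y fy [z gz <-]]; exists y; [exact: (Pq_dom fy) | exists z => //; exact: (Pq_dom gz)].
- apply/seteqP; split => // c _.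
  pose s z := rho (- z).
  have sD a b : s (a + b) = s a + s b by rewrite /s opprD rD.
  have sZ (k : R) b : s (k *: b) = k *: s b by rewrite /s -scalerN rZ.
  have scont : continuous s.
    move=> x; apply: continuous_comp; first exact: opp_continuous.
    exact: rcont.
  have ssurj b : exists z, s z = b by exists (- rinv b); rewrite /s opprK rKinv.
  have santi a b : bf (s a) (s b) = - bf a b.
    have [_ [_ _ bfZ1 _ _]] := HS.
    by rewrite /s ranti' SSDB_bfN2 // opprK -scaleN1r bfZ1 mulN1r.
  have dm x : exists y z, [/\ x = y - z, f y \is a fin_num & g (s z) \is a fin_num].
    have : set_add (dom f) (rho @^-1` dom g) x by rewrite H.
    by move=> [y fy [z gz <-]]; exists y, (- z); rewrite /s opprK.
  have [e [fe ge]] := core2 HS BCf lf BCg lg sD sZ scont ssurj santi dm c.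
  by exists (c + e) => //; exists (- e) => //; rewrite addrK.
- apply/seteqP; split => // c _.
  have : set_add (Pq bf f) (rho @^-1` Pq bf g) c by rewrite H.
  by move=> [y fy [z gz <-]]; exists y; [exact: (Pq_dom fy) | exists z => //; exact: (Pq_dom gz)].
Qed.
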